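(* $f_3(5,3)=\frac{15}{8}=\rho_3(C_5\vee I_3)$, where $C_5\vee I_3$ is the join of the $5$-cycle with an independent set of $3$ vertices.
   Context: $\mathcal{G}(\Delta,\omega)$ denotes the class of finite simple graphs $G$ with maximum degree $\Delta(G)\le\Delta$ and clique number $\omega(G)\le\omega$. $k_t(G)$ is the number of copies of $K_t$ in $G$ and $\rho_t(G)=k_t(G)/|V(G)|$. $f_t(\Delta,\omega)=\sup\{\rho_t(G): G\in\mathcal{G}(\Delta,\omega),\ |V(G)|\ge 1\}$. The join $A\vee B$ of two vertex-disjoint graphs is their disjoint union together with all edges between $V(A)$ and $V(B)$. *)

(* Defs.v *)
From HB Require Import structures.
From mathcomp Require Import all_boot all_order all_algebra.
Set Implicit Arguments. Unset Strict Implicit. Unset Printing Implicit Defensive.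
Import Order.TTheory GRing.Theory Num.Theory.

Definition simple_graph (T : finType) (e : rel T) : Prop :=
  symmetric e /\ irreflexive e.

Definition deg (T : finType) (e : rel T) (x : T) : nat := #|[set y | e x y]|.

Definition is_clique (T : finType) (e : rel T) (S : {set T}) : bool :=
  [forall x in S, forall y in S, (x != y) ==> e x y].

Definition k_t (T : finType) (e : rel T) (t : nat) : nat :=
  #|[set S : {set T} | is_clique e S && (#|S| == t)]|.

Definition rho_t (T : finType) (e : rel T) (t : nat) : rat :=
  ((k_t e t)%:R / (#|T|)%:R)%R.

Definition in_class (T : finType) (e : rel T) (Delta omega : nat) : Prop :=
  simple_graph e /\ (forall x, deg e x <= Delta) /\
  (forall S : {set T}, is_clique e S -> #|S| <= omega).

(* "f_t(Delta,omega) = x": x is the supremum (least upper bound) of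
   { rho_t(G) : G in G(Delta,omega), |V(G)| >= 1 }. *)
Definition is_f_value (t Delta omega : nat) (x : rat) : Prop :=
  (forall (T : finType) (e : rel T),
      0 < #|T| -> in_class e Delta omega -> (rho_t e t <= x)%R) /\
  (forall y : rat,
      (forall (T : finType) (e : rel T),
          0 < #|T| -> in_class e Delta omega -> (rho_t e t <= y)%R) ->
      (x <= y)%R).

Definition join_rel (A B : finType) (eA : rel A) (eB : rel B) : rel (A + B)%type :=
  fun u v => match u, v with
             | inl a, inl a' => eA a a'
             | inr b, inr b' => eB b b'
             | _, _ => true
             end.

(* the n-cycle C_n on 'I_n (for n >= 3) *)
Definition cycle_rel (n : nat) : rel 'I_n :=
  fun i j => (val j == (val i).+1 %% n) || (val i == (val j).+1 %% n).

Definition empty_rel (n : nat) : rel 'I_n := fun _ _ => false.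

Definition C5_join_I3 : rel ('I_5 + 'I_3)%type := join_rel (@cycle_rel 5) (@empty_rel 3).

(* Main.v *)
Require Import Defs.
From HB Require Import structures.
From mathcomp Require Import all_boot all_order all_algebra.
Import Order.TTheory GRing.Theory Num.Theory.
From mathcomp Require Import zify.
Set Implicit Arguments. Unset Strict Implicit. Unset Printing Implicit Defensive.

Lemma card_ind (T : finType) (A : {pred T}) : #|A| = \sum_x (x \in A).
Proof. by rewrite -sum1_card big_mkcond; apply: eq_bigr => x _; case: (x \in A). Qed.

Section G.
Variables (T : finType) (e : rel T).
Hypotheses (esym : symmetric e) (eirr : irreflexive e).
Hypothesis hdeg : forall x, #|[set y | e x y]| <= 5.
Hypothesis hK4 : forall a b c d, e a b -> e a c -> e a d -> e b c -> e b d -> e c d -> False.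

Local Notation N x := [set y | e x y].
Definition cc x y := #|N x :&: N y|.
Definition K3 := [set S : {set T} | is_clique e S && (#|S| == 3)].
Definition tv v := #|[set S in K3 | v \in S]|.

Lemma sum_tt : \sum_v tv v = 3 * #|K3|.
Proof.
rewrite (eq_bigr (fun v => \sum_(S in K3) (v \in S))); last first.
  move=> v _; rewrite /tv card_ind [RHS]big_mkcond /=. apply: eq_bigr => X _.
  by rewrite inE; case: (X \in K3).
rewrite exchange_big /= mulnC -sum_nat_const; apply: eq_bigr => S.
by rewrite inE => /andP[_ /eqP <-]; rewrite card_ind.
Qed.

Lemma ccC x y : cc x y = cc y x.
Proof. by rewrite /cc setIC. Qed.

Lemma cc_sum x y : cc x y = \sum_(z in N x) e y z.
Proof.
rewrite /cc card_ind [RHS]big_mkcond /=; apply: eq_bigr => z _.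
by rewrite !inE (esym y z); case: (e x z).
Qed.


Lemma adj_neq x y : e x y -> x != y.
Proof. by move=> h; apply/eqP => xy; move: h; rewrite xy eirr. Qed.

Lemma cliqueP S x y : is_clique e S -> x \in S -> y \in S -> x != y -> e x y.
Proof.
move=> /forall_inP H xS yS nxy; move: (H x xS) => /forall_inP/(_ y yS)/implyP.
by apply.
Qed.

Lemma clique3 v u w : e v u -> e v w -> e u w -> [set v; u; w] \in K3.
Proof.
move=> vu vw uw; rewrite inE; apply/andP; split.
  apply/forall_inP => x; rewrite !inE; move=> /orP[/orP[]|] /eqP->;
  apply/forall_inP => y; rewrite !inE; move=> /orP[/orP[]|] /eqP->; rewrite ?eqxx //=;
  by apply/implyP => _; rewrite ?vu ?vw ?uw // esym ?vu ?vw ?uw.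
rewrite setUC cardsU1 cards2 !inE.
by rewrite ![w == _]eq_sym (negPf (adj_neq vu)) (negPf (adj_neq vw)) (negPf (adj_neq uw)).
Qed.

Lemma tri_u v u : u \in N v ->
  #|[set S in K3 | (v \in S) && (u \in S)]| = cc v u.
Proof.
rewrite inE => vu.
have -> : [set S in K3 | (v \in S) && (u \in S)] =
          [set [set v; u; w] | w in N v :&: N u].
  apply/setP => S; rewrite inE; apply/idP/idP.
    case/andP => /[dup] SK /[!inE] /andP[cl /eqP c3] /andP[vS uS].
    have nuv : u != v by rewrite eq_sym adj_neq.
    have c2 : #|S :\ v| = 2 by move: c3; rewrite (cardsD1 v) vS => -[].
    have uS' : u \in S :\ v by rewrite !inE nuv.
    have : #|S :\ v :\ u| == 1 by move: c2; rewrite (cardsD1 u) uS' add1n => -[->].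
    case/cards1P => w Sw.
    have wS' : w \in S :\ v :\ u by rewrite Sw inE.
    move: (wS'); rewrite !inE => /and3P[wu wv wS].
    apply/imsetP; exists w.
      by rewrite !inE !(cliqueP cl) // eq_sym.
    by rewrite -(setD1K vS) -(setD1K uS') Sw setUA.
  case/imsetP => w /[!inE] /andP[vw uw] ->.
  by move: (clique3 vu vw uw); rewrite inE => ->; rewrite !inE !eqxx ?orbT.
rewrite card_in_imset // => w1 w2 /[!inE] /andP[vw1 uw1] _ eq12.
have : w1 \in [set v; u; w2] by rewrite -eq12 !inE eqxx !orbT.
rewrite !inE => /orP[/orP[]|] /eqP h //; [move: vw1 | move: uw1];
  by rewrite h eirr.
Qed.

Lemma tri_cc v : 2 * tv v = \sum_(u in N v) cc v u.
Proof.
rewrite /tv mulnC -sum_nat_const.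
rewrite (eq_bigr (fun S : {set T} => \sum_(u in N v) (u \in S))); last first.
  move=> S /[!inE] /andP[/andP[cl /eqP c3] vS].
  have c2 : #|S :\ v| = 2 by move: c3; rewrite (cardsD1 v) vS => -[].
  rewrite -c2 card_ind [RHS]big_mkcond /=; apply: eq_bigr => u _.
  rewrite !inE; case: (eqVneq u v) => [->|nuv] /=.
    by rewrite eirr.
  case uS: (u \in S) => /=; last by case: (e v u).
  by rewrite (cliqueP cl) // eq_sym.
rewrite exchange_big /=; apply: eq_bigr => u uN.
rewrite -(tri_u uN) card_ind [LHS]big_mkcond /=; apply: eq_bigr => S _.
by rewrite !inE; case: (is_clique e S); case: (#|S| == 3); case: (v \in S).
Qed.


Lemma K4_disj a b c : e a b -> e a c -> e b c ->
  #|N a :&: N b| + #|N a :&: N c| <= #|N a|.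
Proof.
move=> ab ac bc.
have d0 : (N a :&: N b) :&: (N a :&: N c) = set0.
  apply/setP => y; rewrite !inE.
  apply/negP => /andP[/andP[ay by_] /andP[_ cy]].
  exact: (hK4 ab ac ay bc by_ cy).
rewrite -[X in X <= _]subn0 -(cards0 T) -d0 -cardsU.
by apply: subset_leq_card; apply/subsetP => y; rewrite !inE => /orP[]/andP[].
Qed.

Lemma cc_edge v u x : e v u -> e v x -> e u x -> cc v u + cc v x <= 5.
Proof. by move=> vu vx ux; apply: leq_trans (hdeg v); apply: K4_disj. Qed.

Lemma sq_bound (d : nat) : 5 * d <= d * d + 6.
Proof. by case: d => [|[|[|d]]] //; nia. Qed.

Definition L v := \sum_(u in N v) \sum_(x in N v) (e u x) * (5 - (cc v u + cc v x)).
Definition L2 v := \sum_(u in N v) (cc v u * cc v u + 6 - 5 * cc v u).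

Lemma core v : 12 * #|N v| = 10 * tv v + L v + 2 * L2 v.
Proof.
set P := \sum_(u in N v) cc v u.
have hP : P = 2 * tv v by rewrite tri_cc.
set Q := \sum_(u in N v) cc v u * cc v u.
have hQ1 : Q = \sum_(u in N v) \sum_(x in N v) (e u x) * cc v u.
  apply: eq_bigr => u _; rewrite {1}(cc_sum v u) big_distrl /=.
  by apply: eq_bigr => x _.
have hQ2 : Q = \sum_(u in N v) \sum_(x in N v) (e u x) * cc v x.
  rewrite hQ1 exchange_big /=; apply: eq_bigr => x _; apply: eq_bigr => u _.
  by rewrite esym.
have hL : 2 * Q + L v = 5 * P.
  rewrite mul2n -addnn {1}hQ1 hQ2 -!big_split /= /P big_distrr /=.
  apply: eq_bigr => u uN; rewrite [in RHS](cc_sum v u) big_distrr -!big_split /=.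
  apply: eq_bigr => x xN; move: uN xN; rewrite !inE => vu vx.
  case ux: (e u x) => /=; last by [].
  have := cc_edge vu vx ux; rewrite /= !mul1n. lia.
have hL2 : Q + 6 * #|N v| = 5 * P + L2 v.
  rewrite mulnC -sum_nat_const /P /L2 big_distrr -!big_split /=.
  by apply: eq_bigr => u _; have := sq_bound (cc v u); lia.
lia.
Qed.


Lemma tt_le6 v : tv v <= 6.
Proof. have := core v; have := hdeg v; lia. Qed.

Lemma tt6 v : tv v = 6 -> [/\ #|N v| = 5, L v = 0 & L2 v = 0].
Proof. move=> h; have := core v; have := hdeg v; rewrite h => ??; split; lia. Qed.

Lemma tt6_edge v u x : tv v = 6 -> e v u -> e v x -> e u x -> cc v u + cc v x = 5.
Proof.
move=> /tt6[_ L0 _] vu vx ux.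
have uN : u \in N v by rewrite inE.
have xN : x \in N v by rewrite inE.
move: L0; rewrite /L => /eqP; rewrite sum_nat_eq0 => /forall_inP/(_ u uN)/eqP/eqP.
rewrite sum_nat_eq0 => /forall_inP/(_ x xN)/eqP; rewrite ux mul1n.
have := cc_edge vu vx ux; lia.
Qed.

Lemma sq_eq (d : nat) : d * d + 6 - 5 * d = 0 -> d = 2 \/ d = 3.
Proof.
move=> h; have : d <= 3.
  rewrite leqNgt; apply/negP => d4; have : 5 * d < d * d + 6 by nia.
  lia.
by case: d h => [|[|[|[|d]]]] //= => [_|_]; [by left|by right].
Qed.

Lemma tt6_deg v u : tv v = 6 -> e v u -> cc v u = 2 \/ cc v u = 3.
Proof.
move=> /tt6[_ _ L0] vu.
have uN : u \in N v by rewrite inE.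
move: L0; rewrite /L2 => /eqP; rewrite sum_nat_eq0 => /forall_inP/(_ u uN)/eqP.
exact: sq_eq.
Qed.

Lemma tt6_count v : tv v = 6 -> 3 <= #|[set u in N v | cc v u == 2]|.
Proof.
move=> h6.
have h1 : \sum_(u in N v) (3 - cc v u) + \sum_(u in N v) cc v u = #|N v| * 3.
  rewrite -big_split -sum_nat_const /=; apply: eq_bigr => u; rewrite inE => vu.
  by case: (tt6_deg h6 vu) => ->.
have h2 : #|[set u in N v | cc v u == 2]| = \sum_(u in N v) (3 - cc v u).
  rewrite card_ind [RHS]big_mkcond /=; apply: eq_bigr => u _; rewrite !inE.
  by case vu: (e v u) => //=; case: (tt6_deg h6 vu) => ->.
have := tri_cc v; have := tt6 h6; case=> n5 _ _; lia.
Qed.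

Lemma tt6_nb v u : tv v = 6 -> e v u -> cc v u = 2 -> tv u < 6.
Proof.
move=> hv vu c2; rewrite ltn_neqAle tt_le6 andbT; apply/eqP => hu.
have : 0 < #|N v :&: N u| by rewrite -/(cc v u) c2.
case/card_gt0P => a; rewrite !inE => /andP[va ua].
have cva : cc v a = 3 by have := tt6_edge hv vu va ua; lia.
have uv : e u v by rewrite esym.
have av : e a v by rewrite esym.
have au : e a u by rewrite esym.
have cua : cc u a = 3.
  have := tt6_edge hu uv ua va.
  by rewrite ccC c2; lia.
have := K4_disj av au vu.
have := hdeg a.
rewrite -/(cc a v) -/(cc a u) ccC (ccC a u) cva cua; lia.
Qed.


Lemma main_bound : 8 * \sum_v tv v <= 45 * #|T|.
Proof.
set A := [set v | tv v == 6].
have hA : forall v, v \in A -> 3 <= #|N v :&: ~: A|.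
  move=> v; rewrite inE => /eqP h6; apply: leq_trans (tt6_count h6) _.
  apply: subset_leq_card; apply/subsetP => u; rewrite !inE => /andP[vu /eqP c2].
  by rewrite vu /= neq_ltn (tt6_nb h6 vu c2).
have hcount : 3 * #|A| <= 5 * #|~: A|.
  rewrite mulnC -sum_nat_const.
  apply: (@leq_trans (\sum_(v in A) #|N v :&: ~: A|)); first exact: leq_sum.
  rewrite (eq_bigr (fun v => \sum_(w in ~: A) e v w)); last first.
    move=> v _; rewrite card_ind [RHS]big_mkcond /=; apply: eq_bigr => w _.
    by rewrite !inE; case: (e v w); case: (tv w != 6).
  rewrite exchange_big /= mulnC -sum_nat_const; apply: leq_sum => w _.
  apply: leq_trans (hdeg w); rewrite card_ind big_mkcond /=; apply: leq_sum => v _.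
  by rewrite inE esym; case: (v \in A).
have hsum : \sum_v tv v <= 6 * #|A| + 5 * #|~: A|.
  rewrite (bigID (fun v => v \in A)) /=; apply: leq_add.
    rewrite mulnC -sum_nat_const; apply: leq_sum => v; rewrite inE => /eqP ->.
    by [].
  rewrite mulnC -sum_nat_const.
  rewrite (eq_bigl (fun v => v \in ~: A)); last by move=> v; rewrite !inE.
  apply: leq_sum => v; rewrite !inE => h; have := tt_le6 v; move: h; lia.
have := cardsC A; lia.
Qed.

End G.

Notation C := C5_join_I3.
Lemma degC x : deg C x <= 5.
Proof.
rewrite /deg card_ind (eq_bigr (fun y => nat_of_bool (C x y))); last by move=> y _; rewrite inE.
rewrite big_sumType /= !big_ord_recl !big_ord0 /=.
case: x => [[[|[|[|[|[|i]]]]] Hi]|[[|[|[|i]]] Hi]] //; by vm_compute.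
Qed.
Lemma cc2 (v : 'I_5 + 'I_3) :
  \sum_u (C v u) * \sum_w (C v w && C u w) = if v is inl _ then 12 else 10.
Proof.
rewrite big_sumType /= !big_ord_recl !big_ord0 /=.
rewrite !big_sumType /= !big_ord_recl !big_ord0 /=.
case: v => [[[|[|[|[|[|i]]]]] Hi]|[[|[|[|i]]] Hi]] //; by vm_compute.
Qed.
Lemma C_sym : symmetric C.
Proof. by move=> [i|i] [j|j] //=; rewrite /cycle_rel orbC. Qed.
Lemma C_irr : irreflexive C.
Proof. by move=> [[[|[|[|[|[|i]]]]] Hi]|[[|[|[|i]]] Hi]]. Qed.
Lemma c5tri (i j k : 'I_5) : cycle_rel i j -> cycle_rel j k -> cycle_rel i k -> False.
Proof.
by case: i => [[|[|[|[|[|i]]]]] Hi]; case: j => [[|[|[|[|[|j]]]]] Hj];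
  case: k => [[|[|[|[|[|k]]]]] Hk].
Qed.
Lemma C_noK4 a b c d : C a b -> C a c -> C a d -> C b c -> C b d -> C c d -> False.
Proof.
rewrite /C5_join_I3 /=; case: a => a; case: b => b; case: c => c; case: d => d //= h1 h2 h3 h4 h5 h6;
  first [exact: (c5tri h1 h4 h2) | exact: (c5tri h1 h5 h3)
        | exact: (c5tri h2 h6 h3) | exact: (c5tri h4 h6 h5)].
Qed.

Lemma class_K4 (T : finType) (e : rel T) : symmetric e -> irreflexive e ->
  (forall S : {set T}, is_clique e S -> #|S| <= 3) ->
  forall a b c d, e a b -> e a c -> e a d -> e b c -> e b d -> e c d -> False.
Proof.
move=> esym eirr hcl a b c d ab ac ad bc bd cd.
have := hcl [set a; b; c; d].
have -> : is_clique e [set a; b; c; d].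
  apply/forall_inP => x; rewrite !inE => /orP[/orP[/orP[]|]|] /eqP->;
  apply/forall_inP => y; rewrite !inE => /orP[/orP[/orP[]|]|] /eqP->;
  rewrite ?eqxx //=; apply/implyP => _;
  by rewrite ?ab ?ac ?ad ?bc ?bd ?cd // esym ?ab ?ac ?ad ?bc ?bd ?cd.
rewrite setUC cardsU1 setUC cardsU1 cards2 !inE.
rewrite ![d == _]eq_sym ![c == _]eq_sym.
rewrite (negPf (adj_neq eirr ab)) (negPf (adj_neq eirr ac)) (negPf (adj_neq eirr ad)).
rewrite (negPf (adj_neq eirr bc)) (negPf (adj_neq eirr bd)) [d == c]eq_sym (negPf (adj_neq eirr cd)).
by move=> /(_ isT).
Qed.

Lemma pick4 (T : finType) (S : {set T}) : 3 < #|S| ->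
  exists a b c d, [/\ a \in S, b \in S, c \in S & d \in S] /\
    (a != b /\ a != c /\ a != d) /\ (b != c /\ b != d /\ c != d).
Proof.
move=> h.
case/card_gt0P: (ltnW (ltnW (ltnW h))) => a aS.
have h1 : 2 < #|S :\ a| by move: h; rewrite (cardsD1 a) aS add1n ltnS.
case/card_gt0P: (ltnW (ltnW h1)) => b; rewrite !inE => /andP[ba bS].
have bS' : b \in S :\ a by rewrite !inE ba.
have h2 : 1 < #|S :\ a :\ b| by move: h1; rewrite (cardsD1 b) bS' add1n ltnS.
case/card_gt0P: (ltnW h2) => c; rewrite !inE => /and3P[cb ca cS].
have cS' : c \in S :\ a :\ b by rewrite !inE cb ca.
have h3 : 0 < #|S :\ a :\ b :\ c| by move: h2; rewrite (cardsD1 c) cS' add1n ltnS.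
case/card_gt0P: h3 => d; rewrite !inE => /and4P[dc db da dS].
exists a, b, c, d; split; first by [].
by do !split; first [assumption | by rewrite eq_sym].
Qed.

Lemma C_clique (S : {set 'I_5 + 'I_3}) : is_clique C S -> #|S| <= 3.
Proof.
move=> cl; rewrite leqNgt; apply/negP => /pick4.
case=> a [b [c [d [[aS bS cS dS] [[nab [nac nad]] [nbc [nbd ncd]]]]]]].
exact: (C_noK4 (cliqueP cl aS bS nab) (cliqueP cl aS cS nac) (cliqueP cl aS dS nad)
  (cliqueP cl bS cS nbc) (cliqueP cl bS dS nbd) (cliqueP cl cS dS ncd)).
Qed.

Lemma C_class : in_class C 5 3.
Proof. split; first by split; [exact: C_sym | exact: C_irr]. split; [exact: degC | exact: C_clique]. Qed.

Lemma C_tv (v : 'I_5 + 'I_3) : tv C v = if v is inl _ then 6 else 5.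
Proof.
apply/eqP; rewrite -(eqn_pmul2l (isT : 0 < 2)) tri_cc; [|exact: C_sym|exact: C_irr].
rewrite big_mkcond /=.
rewrite (eq_bigr (fun u => C v u * \sum_w (C v w && C u w))); last first.
  move=> u _; rewrite inE /cc card_ind.
  case: (C v u) => /=; last by [].
  by rewrite mul1n; apply: eq_bigr => w _; rewrite !inE.
by rewrite cc2; case: v.
Qed.

Lemma C_k3 : k_t C 3 = 15.
Proof.
have := sum_tt C; rewrite big_sumType /=.
rewrite (eq_bigr (fun _ => 6)); last by move=> i _; rewrite C_tv.
rewrite [X in _ + X = _](eq_bigr (fun _ => 5)); last by move=> i _; rewrite C_tv.
rewrite !sum_nat_const !card_ord /= => h.
by apply/eqP; rewrite -(eqn_pmul2l (isT : 0 < 3)) -h.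
Qed.

Lemma rat_le (k n : nat) : 0 < n -> 8 * k <= 15 * n ->
  ((k%:R / n%:R : rat) <= 15%:R / 8%:R)%R.
Proof.
move=> n0 h.
rewrite ler_pdivrMr ?ltr0n // mulrAC ler_pdivlMr ?ltr0n // -!natrM ler_nat.
by rewrite mulnC.
Qed.

Lemma gen_bound (T : finType) (e : rel T) : 0 < #|T| -> in_class e 5 3 ->
  (rho_t e 3 <= 15%:R / 8%:R)%R.
Proof.
move=> n0 [[esym eirr] [hdeg hcl]].
have K4 := class_K4 esym eirr hcl.
have hb := main_bound esym eirr hdeg K4.
rewrite (sum_tt e) in hb.
apply: rat_le => //.
rewrite -(leq_pmul2l (isT : 0 < 3)) mulnCA mulnA.
by move: hb; rewrite mulnA (mulnA 3 15) -/(k_t e 3).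
Qed.

Theorem mainTheorem17 :
  is_f_value 3 5 3 (15%:R / 8%:R)%R /\
  rho_t C5_join_I3 3 = (15%:R / 8%:R)%R.
Proof.
have hrho : rho_t C5_join_I3 3 = (15%:R / 8%:R)%R.
  by rewrite /rho_t C_k3 card_sum !card_ord.
split => //; split.
  by move=> T e; apply: gen_bound.
move=> y hy; rewrite -hrho; apply: hy; last exact: C_class.
by rewrite card_sum !card_ord.
Qed.
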